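(* Let $n\geq 2$ be a natural number and let $R\subseteq I=[0,1]$ be a nonempty perfect (closed, without isolated points) subset. Then the $n$-Split Interval $S_n(R)$ contains a subspace homeomorphic to the $n$-Split Interval $S_n(I)$.
   Context: For $n\geq 2$ and a perfect set $R\subseteq[0,1]$, the $n$-Split Interval of $R$, $S_n(R)$, is the set $R\times\{0,\ldots,n-1\}$ with the topology in which the points $(x,i)$ with $i\in\{2,\ldots,n-1\}$ are isolated, and the points $(x,0)$ and $(x,1)$ have respective basic neighbourhoods $\{(x,0)\}\cup\{(y,i): y\in R,\ z_0<y<x,\ i\in\{0,\ldots,n-1\}\}$ and $\{(x,1)\}\cup\{(y,i): y\in R,\ x<y<z_1,\ i\in\{0,\ldots,n-1\}\}$, where $z_0,z_1\in R$ with $z_0<x<z_1$; if $x=\min R$ then $(x,0)$ is isolated, and if $x=\max R$ then $(x,1)$ is isolated. $S_n(I)$ is $S_n(R)$ for $R=I=[0,1]$. *)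

(* Defs.v *)
From HB Require Import structures.
From mathcomp Require Import all_boot all_order all_algebra.
From mathcomp Require Import all_classical all_reals all_analysis.
Set Implicit Arguments. Unset Strict Implicit. Unset Printing Implicit Defensive.
Import Order.TTheory GRing.Theory Num.Theory.
Local Open Scope classical_set_scope.
Local Open Scope ring_scope.

(* The n-Split Interval S_n(R) of a set R of reals, as a subset of K * nat
   (the point (x,i) with x in R and i < n), together with its topology,
   given by the neighbourhood bases of the paper. *)

Definition split_carrier (K : realType) (R : set K) (n : nat) : set (K * nat) :=
  [set p | R p.1 /\ (p.2 < n)%N].

Definition split_basic (K : realType) (R : set K) (n : nat)
    (p : K * nat) (B : set (K * nat)) : Prop :=
  let x := p.1 in let i := p.2 in
  if (2 <= i)%N then B = [set p]
  else if i == 0%N then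
    ((forall y, R y -> x <= y) /\ B = [set p]) \/
    (exists z0, R z0 /\ z0 < x /\
       B = [set p] `|` [set q | R q.1 /\ z0 < q.1 /\ q.1 < x /\ (q.2 < n)%N])
  else
    ((forall y, R y -> y <= x) /\ B = [set p]) \/
    (exists z1, R z1 /\ x < z1 /\
       B = [set p] `|` [set q | R q.1 /\ x < q.1 /\ q.1 < z1 /\ (q.2 < n)%N]).

Definition split_open (K : realType) (R : set K) (n : nat) (U : set (K * nat)) : Prop :=
  U `<=` split_carrier R n /\
  forall p, U p -> exists B, split_basic R n p B /\ B `<=` U.

(* X (with carrier CX and open sets OX) is homeomorphic to a subspace of
   Y (with carrier CY and open sets OY): there is a map f : CX -> CY that is
   a homeomorphism onto its image f(CX) with the subspace topology, i.e.
   f is injective on CX and the open sets of X are exactly the preimages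
   (in CX) of the open sets of Y. *)
Definition embeds_into {A B : Type}
    (CX : set A) (OX : set A -> Prop) (CY : set B) (OY : set B -> Prop) : Prop :=
  exists f : A -> B,
    (forall a, CX a -> CY (f a)) /\
    {in CX &, injective f} /\
    (forall U, U `<=` CX ->
       (OX U <-> exists V, OY V /\ U = CX `&` (f @^-1` V))).

Definition unit_interval (K : realType) : set K := `[0, 1]%classic.

(* Main.v *)
Require Import Defs.
From HB Require Import structures.
From mathcomp Require Import all_boot all_order all_algebra.
From mathcomp Require Import all_classical all_reals all_analysis.
From mathcomp Require Import lra.
Import Order.TTheory GRing.Theory Num.Theory numFieldNormedType.Exports.
Local Open Scope classical_set_scope.
Local Open Scope ring_scope.

Lemma basic_self (K : realType) (R : set K) n p B : split_basic R n p B -> B p.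
Proof.
rewrite /split_basic /=; case: ifP => _; first by move=> ->.
case: ifP => _ [[_ ->]|[z [_ [_ ->]]]] //=; by left.
Qed.

Lemma basic_open (K : realType) (R : set K) n c B q :
  split_carrier R n c -> split_basic R n c B -> B q ->
  exists B2, split_basic R n q B2 /\ B2 `<=` B.
Proof.
move=> Cc Bc Bq; have [->|qc] := eqVneq q c; first by exists B; split.
move: Cc Bc Bq qc; case: c => x i; case: q => y j.
rewrite /split_carrier /split_basic /= => -[Rx ilt].
case: ifP => i2; first by move=> -> /= ->; rewrite eqxx.
case: ifP => i0.
  case=> [[_ ->] /= ->|[z0 [Rz0 [z0x ->]]]]; first by rewrite eqxx.
  case=> [/= ->|/= [Ry [z0y [yx jn]]]]; first by rewrite eqxx.
  move=> _; rewrite /split_basic /=.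
  case j2: (1 < j)%N.
    exists [set (y, j)]; split => // _ -> /=; right; done.
  case j0: (j == 0)%N.
    exists ([set (y, j)] `|` [set q | R q.1 /\ z0 < q.1 /\ q.1 < y /\ (q.2 < n)%N]).
    split; first by right; exists z0.
    move=> q [-> |[Rq [? [? ?]]]]; right => //=; split => //; split => //; split => //.
    exact: lt_trans yx.
  exists ([set (y, j)] `|` [set q | R q.1 /\ y < q.1 /\ q.1 < x /\ (q.2 < n)%N]).
  split; first by right; exists x.
  move=> q [-> |[Rq [? [? ?]]]]; right => //=; split => //; split => //.
  exact: lt_trans z0y _.
case=> [[_ ->] /= ->|[z1 [Rz1 [xz1 ->]]]]; first by rewrite eqxx.
case=> [/= ->|/= [Ry [xy [yz1 jn]]]]; first by rewrite eqxx.
move=> _; rewrite /split_basic /=.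
case j2: (1 < j)%N.
  exists [set (y, j)]; split => // _ -> /=; right; done.
case j0: (j == 0)%N.
  exists ([set (y, j)] `|` [set q | R q.1 /\ x < q.1 /\ q.1 < y /\ (q.2 < n)%N]).
  split; first by right; exists x.
  move=> q [-> |[Rq [? [? ?]]]]; right => //=; split => //; split => //; split => //.
  exact: lt_trans yz1.
exists ([set (y, j)] `|` [set q | R q.1 /\ y < q.1 /\ q.1 < z1 /\ (q.2 < n)%N]).
split; first by right; exists z1.
move=> q [-> |[Rq [? [? ?]]]]; right => //=; split => //; split => //.
exact: lt_trans xy _.
Qed.

Arguments basic_self {K R n p B}.
Arguments basic_open {K R n c B q}.

Lemma IE (K : realType) (x : K) : @unit_interval K x <-> 0 <= x <= 1.
Proof. by rewrite /unit_interval /= in_itv. Qed.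

Lemma embed_ab (K : realType) (n : nat) (R : set K) (a b : K -> K) :
  (1 < n)%N ->
  (forall x, @unit_interval K x -> R (a x)) ->
  (forall x, @unit_interval K x -> R (b x)) ->
  (forall x, @unit_interval K x -> a x <= b x) ->
  (forall x y, @unit_interval K x -> @unit_interval K y -> x < y -> b x < a y) ->
  (forall x w, @unit_interval K x -> 0 < x -> R w -> w < a x ->
     exists z, @unit_interval K z /\ z < x /\ w < a z) ->
  (forall x w, @unit_interval K x -> x < 1 -> R w -> b x < w ->
     exists z, @unit_interval K z /\ x < z /\ b z < w) ->
  embeds_into (split_carrier (@unit_interval K) n) (split_open (@unit_interval K) n)
              (split_carrier R n) (split_open R n).
Proof.
move=> n1 Ra Rb ab bla Lc Rc.
set I := @unit_interval K.
pose f (p : K * nat) := if p.2 == 1%N then (b p.1, 1%N) else (a p.1, p.2).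
have I0 : I 0 by apply/IE; rewrite lexx ler01.
have I1 : I 1 by apply/IE; rewrite lexx ler01.
have alt x y : I x -> I y -> x < y -> a x < a y.
  by move=> Ix Iy xy; apply: le_lt_trans (ab _ Ix) (bla _ _ Ix Iy xy).
have blt x y : I x -> I y -> x < y -> b x < b y.
  by move=> Ix Iy xy; apply: lt_le_trans (bla _ _ Ix Iy xy) (ab _ Iy).
have fbnd p : I p.1 -> a p.1 <= (f p).1 <= b p.1.
  by move=> Ip; rewrite /f; case: ifP => _ /=; rewrite ?lexx ab.
have fCY p : split_carrier I n p -> split_carrier R n (f p).
  case: p => x i [/= Ix ilt]; rewrite /f /=; case: ifP => _; split => //=.
  exact: Rb. exact: Ra.
have fltA p x : split_carrier I n p -> I x -> (f p).1 < a x -> p.1 < x.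
  case: p => y j [/= Iy _] Ix h; rewrite ltNge; apply/negP => xy.
  move: h; apply/negP; rewrite -leNgt.
  have /andP[+ _] := fbnd (y, j) Iy; apply: le_trans.
  move: xy; rewrite le_eqVlt => /orP[/eqP -> //|xy].
  exact/ltW/alt.
have fgtB p x : split_carrier I n p -> I x -> b x < (f p).1 -> x < p.1.
  case: p => y j [/= Iy _] Ix h; rewrite ltNge; apply/negP => yx.
  move: h; apply/negP; rewrite -leNgt.
  have /andP[_ +] := fbnd (y, j) Iy; move/le_trans; apply.
  move: yx; rewrite le_eqVlt => /orP[/eqP -> //|yx].
  exact/ltW/blt.
have ltfA p x : split_carrier I n p -> I x -> p.1 < x -> (f p).1 < a x.
  case: p => y j [/= Iy _] Ix yx.
  have /andP[_ +] := fbnd (y, j) Iy; move/le_lt_trans; apply; exact: bla.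
have gtfB p x : split_carrier I n p -> I x -> x < p.1 -> b x < (f p).1.
  case: p => y j [/= Iy _] Ix xy.
  have /andP[+ _] := fbnd (y, j) Iy; apply: lt_le_trans; exact: bla.
have finj : {in split_carrier I n &, injective f}.
  case=> x i; case=> y j; rewrite !inE => -[/= Ix _] [/= Iy _].
  have ainj : a x = a y -> x = y.
    move=> e; apply/eqP; rewrite eq_le !leNgt; apply/andP; split; apply/negP => h.
    - by move: (alt _ _ Iy Ix h); rewrite e ltxx.
    - by move: (alt _ _ Ix Iy h); rewrite e ltxx.
  have binj : b x = b y -> x = y.
    move=> e; apply/eqP; rewrite eq_le !leNgt; apply/andP; split; apply/negP => h.
    - by move: (blt _ _ Iy Ix h); rewrite e ltxx.
    - by move: (blt _ _ Ix Iy h); rewrite e ltxx.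
  rewrite /f /=; case: ifP => /eqP i1; case: ifP => /eqP j1 [].
  - by move=> /binj ->; rewrite i1 j1.
  - by move=> _ e; rewrite -e in j1.
  - by move=> _ e; rewrite e in i1.
  - by move=> /ainj -> ->.
have finj' q p : split_carrier I n q -> split_carrier I n p -> f q = f p -> q = p.
  by move=> Cq Cp; apply: finj; rewrite inE.
have F p B : split_carrier I n p -> split_basic I n p B ->
    exists B', split_basic R n (f p) B' /\ B' `<=` split_carrier R n /\
      (split_carrier I n `&` f @^-1` B' `<=` B).
  move=> Cp; have Cfp := fCY _ Cp; move: Cp Cfp.
  case: p => x i Cp; have [/= Ix ilt] := Cp.
  case: (ltnP 1 i) => i2.
    have fp : f (x, i) = (a x, i) by rewrite /f /=; case: i i2 {ilt Cp} => [|[|]].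
    rewrite fp => Cfp; rewrite /split_basic /= i2 => ->.
    exists [set (a x, i)]; split; first by rewrite /split_basic /= ?i2.
    split; first by move=> q ->.
    move=> q [Cq /= fq]; apply: finj' => //; by rewrite fp.
  case: i i2 ilt Cp => [|[|//]] _ ilt Cp.
  - have fp : f (x, 0%N) = (a x, 0%N) by [].
    rewrite fp => Cfp; rewrite /split_basic /=.
    case=> [[xmin ->]|[z0 [Iz0 [z0x ->]]]].
      have x0 : x = 0.
        by apply/eqP; rewrite eq_le xmin //=; case/IE/andP: Ix.
      have [[w0 [Rw0 w0a]]|nw] := pselect (exists w0, R w0 /\ w0 < a x).
        exists ([set (a x, 0%N)] `|` [set q | R q.1 /\ w0 < q.1 /\ q.1 < a x /\ (q.2 < n)%N]).
        split; first by right; exists w0.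
        split; first by move=> q [->|[Rq [_ [_ qn]]]].
        move=> q [Cq [fq|[_ [_ [fqa _]]]]].
          by apply: finj' => //; rewrite fp.
        have := fltA q x Cq Ix fqa; rewrite x0 ltNge.
        by have [/IE/andP[-> _] _] := Cq.
      exists [set (a x, 0%N)]; split.
        left; split => // y Ry; rewrite leNgt; apply/negP => ya; apply: nw.
        by exists y.
      split; first by move=> q ->.
      by move=> q [Cq fq]; apply: finj' => //; rewrite fp.
    exists ([set (a x, 0%N)] `|` [set q | R q.1 /\ b z0 < q.1 /\ q.1 < a x /\ (q.2 < n)%N]).
    split; first by right; exists (b z0); split; [exact: Rb|split; [exact: bla|]].
    split; first by move=> q [->|[Rq [_ [_ qn]]]].
    move=> q [Cq [fq|[_ [zq [fqa _]]]]].
      by left; apply: finj' => //; rewrite fp.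
    right; have [Iq qn] := Cq; split => //; split; first exact: fgtB zq.
    by split => //; exact: fltA fqa.
  - have fp : f (x, 1%N) = (b x, 1%N) by [].
    rewrite fp => Cfp; rewrite /split_basic /=.
    case=> [[xmax ->]|[z1 [Iz1 [xz1 ->]]]].
      have x1 : x = 1.
        by apply/eqP; rewrite eq_le xmax // andbC; case/IE/andP: Ix => _ ->.
      have [[w1 [Rw1 w1b]]|nw] := pselect (exists w1, R w1 /\ b x < w1).
        exists ([set (b x, 1%N)] `|` [set q | R q.1 /\ b x < q.1 /\ q.1 < w1 /\ (q.2 < n)%N]).
        split; first by right; exists w1.
        split; first by move=> q [->|[Rq [_ [_ qn]]]].
        move=> q [Cq [fq|[_ [fqb [_ _]]]]].
          by apply: finj' => //; rewrite fp.
        have := fgtB q x Cq Ix fqb; rewrite x1 ltNge.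
        by have [/IE/andP[_ ->] _] := Cq.
      exists [set (b x, 1%N)]; split.
        left; split => // y Ry; rewrite leNgt; apply/negP => ya; apply: nw.
        by exists y.
      split; first by move=> q ->.
      by move=> q [Cq fq]; apply: finj' => //; rewrite fp.
    exists ([set (b x, 1%N)] `|` [set q | R q.1 /\ b x < q.1 /\ q.1 < a z1 /\ (q.2 < n)%N]).
    split; first by right; exists (a z1); split; [exact: Ra|split; [exact: bla|]].
    split; first by move=> q [->|[Rq [_ [_ qn]]]].
    move=> q [Cq [fq|[_ [xq [fqa _]]]]].
      by left; apply: finj' => //; rewrite fp.
    right; have [Iq qn] := Cq; split => //; split; first exact: fgtB xq.
    by split => //; exact: fltA fqa.
have Bk p B' : split_carrier I n p -> split_basic R n (f p) B' ->
    exists B, split_basic I n p B /\ B `<=` split_carrier I n `&` f @^-1` B'.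
  move=> Cp Bfp; have B'fp := basic_self Bfp; move: Cp Bfp B'fp.
  case: p => x i Cp; have [/= Ix ilt] := Cp.
  case: (ltnP 1 i) => i2.
    have fp : f (x, i) = (a x, i) by rewrite /f /=; case: i i2 {ilt Cp} => [|[|]].
    rewrite fp => _ B'fp.
    exists [set (x, i)]; split; first by rewrite /split_basic /= ?i2.
    by move=> q ->; split => //=; rewrite fp.
  case: i i2 ilt Cp => [|[|//]] _ ilt Cp.
  - have fp : f (x, 0%N) = (a x, 0%N) by [].
    rewrite fp /split_basic /= => + B'fp.
    have [x0|x0] := eqVneq x 0.
      move=> _; exists [set (x, 0%N)]; split.
        by left; split => // y /IE/andP[+ _]; rewrite x0.
      by move=> q ->; split => //=; rewrite fp.
    have xpos : 0 < x by rewrite lt_neqAle eq_sym x0; case/IE/andP: Ix.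
    case=> [[amin _]|[w0 [Rw0 [w0a B'E]]]].
      have := amin _ (Ra _ I0); rewrite leNgt => /negP; case.
      exact: alt.
    have [z [Iz [zx w0z]]] := Lc x w0 Ix xpos Rw0 w0a.
    exists ([set (x, 0%N)] `|` [set q | I q.1 /\ z < q.1 /\ q.1 < x /\ (q.2 < n)%N]).
    split; first by right; exists z.
    move=> q [->|[Iq [zq [qx qn]]]]; first by split => //=; rewrite fp.
    have Cq : split_carrier I n q by [].
    have [Rfq fqn] := fCY _ Cq.
    split => //=; rewrite B'E; right; split => //; split.
      apply: lt_le_trans w0z _; apply: le_trans (ab _ Iz) _; apply/ltW.
      exact: gtfB.
    by split => //; exact: ltfA.
  - have fp : f (x, 1%N) = (b x, 1%N) by [].
    rewrite fp /split_basic /= => + B'fp.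
    have [x1|x1] := eqVneq x 1.
      move=> _; exists [set (x, 1%N)]; split.
        by left; split => // y /IE/andP[_]; rewrite x1.
      by move=> q ->; split => //=; rewrite fp.
    have xlt : x < 1 by rewrite lt_neqAle x1; case/IE/andP: Ix.
    case=> [[bmax _]|[w1 [Rw1 [bw1 B'E]]]].
      have := bmax _ (Rb _ I1); rewrite leNgt => /negP; case.
      exact: blt.
    have [z [Iz [xz bz]]] := Rc x w1 Ix xlt Rw1 bw1.
    exists ([set (x, 1%N)] `|` [set q | I q.1 /\ x < q.1 /\ q.1 < z /\ (q.2 < n)%N]).
    split; first by right; exists z.
    move=> q [->|[Iq [xq [qz qn]]]]; first by split => //=; rewrite fp.
    have Cq : split_carrier I n q by [].
    have [Rfq fqn] := fCY _ Cq.
    split => //=; rewrite B'E; right; split => //; split; first exact: gtfB.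
    split => //; apply: le_lt_trans _ bz; apply: le_trans _ (ab _ Iz); apply/ltW.
    exact: ltfA.
exists f; split; first exact: fCY.
split; first exact: finj.
move=> U UC; split.
  move=> [_ OU].
  exists [set c | exists p, U p /\ exists B', split_basic R n (f p) B' /\
     B' `<=` split_carrier R n /\ (split_carrier I n `&` f @^-1` B' `<=` U) /\ B' c].
  split.
    split; first by move=> q [p [_ [B' [_ [B'C [_ B'q]]]]]]; exact: B'C.
    move=> q [p [Up [B' [bB' [B'C [pre B'q]]]]]].
    have [B2 [bB2 B2B']] := basic_open (fCY _ (UC _ Up)) bB' B'q.
    exists B2; split => // c B2c; exists p; split => //; exists B'; do 3!split => //.
    exact: B2B'.
  apply/seteqP; split.
    move=> p Up; split; first exact: UC.
    have [B [bB BU]] := OU p Up.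
    have [B' [bB' [B'C pre]]] := F p B (UC _ Up) bB.
    exists p; split => //; exists B'; split => //; split => //; split.
      by move=> q /pre /BU.
    exact: basic_self bB'.
  by move=> p [Cp [p' [_ [B' [_ [_ [pre B'fp]]]]]]]; apply: pre.
move=> [V [[VC OV] ->]]; split; first by move=> q [].
move=> p [Cp Vfp].
have [B' [bB' B'V]] := OV _ Vfp.
have [B [bB BB']] := Bk p B' Cp bB'.
exists B; split => // q /BB' [Cq B'fq]; split => //; exact: B'V.
Qed.

Lemma lim_pt (K : realType) (R : set K) (t e : K) : perfect_set R -> R t -> 0 < e ->
  exists y, y != t /\ R y /\ `|t - y| < e.
Proof.
move=> [_ lpR] Rt e0; rewrite -lpR in Rt.
have [y [yt Ry By]] := Rt _ (nbhsx_ballx t e e0).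
by exists y; split => //; split => //; move: By; rewrite -ball_normE.
Qed.

Lemma sort3 (K : realType) (P : K -> Prop) p q s :
  P p -> P q -> P s -> p != q -> q != s -> p != s ->
  exists x y z, P x /\ P y /\ P z /\ x < y /\ y < z.
Proof.
move=> Pp Pq Ps dpq dqs dps.
case: (ltgtP p q) => pq; last by rewrite pq eqxx in dpq.
- case: (ltgtP q s) => qs; last by rewrite qs eqxx in dqs.
  + by exists p, q, s.
  + case: (ltgtP p s) => ps; last by rewrite ps eqxx in dps.
    * by exists p, s, q.
    * by exists s, p, q.
- case: (ltgtP q s) => qs; last by rewrite qs eqxx in dqs.
  + case: (ltgtP p s) => ps; last by rewrite ps eqxx in dps.
    * by exists q, p, s.
    * by exists q, s, p.
  + by exists s, q, p.
Qed.

Lemma three_in (K : realType) (R : set K) (t r s : K) : perfect_set R -> R t ->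
  r < t -> t < s ->
  exists x y z, (R x /\ r < x < s) /\ (R y /\ r < y < s) /\ (R z /\ r < z < s)
    /\ x < y /\ y < z.
Proof.
move=> pR Rt rt ts.
have e1p : 0 < Num.min (t - r) (s - t) by rewrite lt_min !subr_gt0 rt ts.
have [t1 [t1t [Rt1 ht1]]] := lim_pt _ _ _ _ pR Rt e1p.
have e2p : 0 < Num.min (Num.min (t - r) (s - t)) `|t - t1|.
  by rewrite lt_min e1p normr_gt0 subr_eq0 eq_sym t1t.
have [t2 [t2t [Rt2 ht2]]] := lim_pt _ _ _ _ pR Rt e2p.
move: ht2; rewrite lt_min => /andP[ht2 ht21].
have t21 : t2 != t1.
  by apply/negP => /eqP e; move: ht21; rewrite e ltxx.
move: ht1 ht2; rewrite !lt_min !ltr_norml => /andP[/andP[a1 a2] /andP[a3 a4]].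
move=> /andP[/andP[b1 b2] /andP[b3 b4]].
apply: (@sort3 K (fun x => R x /\ r < x < s) t t1 t2).
- by split; last by apply/andP.
- split => //; apply/andP; split; lra.
- split => //; apply/andP; split; lra.
- by rewrite eq_sym.
- by rewrite eq_sym.
- by rewrite eq_sym.
Qed.

Definition good {K : realType} (R : set K) (r s : K) := exists t, R t /\ r < t /\ t < s.

Fixpoint dyV {K : realType} (mid : K -> K -> K) (u w : K) (m : nat) {struct m} : nat -> K :=
  fun k => match m with
  | 0 => if k == 0%N then u else w
  | m'.+1 => if odd k then mid (dyV mid u w m' k./2) (dyV mid u w m' (k./2).+1)
             else dyV mid u w m' k./2
  end.

Lemma good_lt {K : realType} {R : set K} {r s : K} : good R r s -> r < s.
Proof. by case=> t [_ [rt ts]]; exact: lt_trans ts. Qed.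

Lemma dyV_inv (K : realType) (R : set K) mid u w :
  (forall r s, good R r s -> R (mid r s) /\ good R r (mid r s) /\ good R (mid r s) s) ->
  R u -> R w -> good R u w ->
  forall m k, (k < 2 ^ m)%N ->
    R (dyV mid u w m k) /\ R (dyV mid u w m k.+1) /\
    good R (dyV mid u w m k) (dyV mid u w m k.+1).
Proof.
move=> midP Ru Rw guw; elim=> [|m IH] k.
  by rewrite expn0 ltnS leqn0 => /eqP -> /=.
move=> km; have jm : (k./2 < 2 ^ m)%N by rewrite ltn_half_double -mul2n -expnS.
have [Rj [Rj1 gj]] := IH _ jm.
have [Rm [g1 g2]] := midP _ _ gj.
have h1 : (k.+1)./2 = (odd k + k./2)%N by rewrite -uphalfE uphalf_half.
rewrite /= uphalf_half; case: (odd k) => /=.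
  by rewrite add1n; split => //; split.
by rewrite add0n; split => //; split.
Qed.

Lemma dyV_upj (K : realType) (mid : K -> K -> K) u w m j k :
  dyV mid u w (m + j) (k * 2 ^ j) = dyV mid u w m k.
Proof.
elim: j => [|j IH]; first by rewrite addn0 expn0 muln1.
rewrite addnS expnS mulnCA mul2n /= odd_double doubleK; exact: IH.
Qed.

Lemma V_lt {K : realType} {R : set K} {V : nat -> nat -> K} :
  (forall m k, (k < 2 ^ m)%N -> R (V m k) /\ R (V m k.+1) /\ good R (V m k) (V m k.+1)) ->
  forall m j k, (j < k)%N -> (k <= 2 ^ m)%N -> V m j < V m k.
Proof.
move=> Hinv m j; elim=> [//|k IH] jk km.
have [_ [_ g]] := Hinv m k km.
have := good_lt g; move: jk; rewrite ltnS leq_eqVlt => /orP[/eqP -> //|jk].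
by apply: lt_trans; apply: IH => //; exact: ltnW.
Qed.

Lemma V_le {K : realType} {R : set K} {V : nat -> nat -> K} :
  (forall m k, (k < 2 ^ m)%N -> R (V m k) /\ R (V m k.+1) /\ good R (V m k) (V m k.+1)) ->
  forall m j k, (j <= k)%N -> (k <= 2 ^ m)%N -> V m j <= V m k.
Proof.
move=> Hinv m j k; rewrite leq_eqVlt => /orP[/eqP -> //|jk] km.
exact/ltW/(V_lt Hinv).
Qed.

Lemma V_R {K : realType} {R : set K} {V : nat -> nat -> K} :
  (forall m k, (k < 2 ^ m)%N -> R (V m k) /\ R (V m k.+1) /\ good R (V m k) (V m k.+1)) ->
  forall m k, (k <= 2 ^ m)%N -> R (V m k).
Proof.
move=> Hinv m k; rewrite leq_eqVlt => /orP[/eqP ->|km]; last by case: (Hinv m k km).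
have := expn_gt0 2 m; case E: (2 ^ m)%N => [//|p] _.
have pm : (p < 2 ^ m)%N by rewrite E.
by case: (Hinv m p pm) => _ [].
Qed.

Lemma V_cmp {K : realType} {R : set K} {V : nat -> nat -> K} :
  (forall m k, (k < 2 ^ m)%N -> R (V m k) /\ R (V m k.+1) /\ good R (V m k) (V m k.+1)) ->
  (forall m j k, V (m + j)%N (k * 2 ^ j)%N = V m k) ->
  forall m k m' k', (k' <= 2 ^ m')%N ->
    (k * 2 ^ m' < k' * 2 ^ m)%N -> V m k < V m' k'.
Proof.
move=> Hinv Hup m k m' k' km' lt.
rewrite -(Hup m m' k) -(Hup m' m k') addnC.
apply: (V_lt Hinv) => //.
by rewrite expnD leq_pmul2r ?expn_gt0.
Qed.

Definition dy {K : realType} (m k : nat) : K := k%:R / (2 ^ m)%:R.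

Lemma pow_gt0 (K : realType) m : 0 < (2 ^ m)%:R :> K.
Proof. by rewrite ltr0n expn_gt0. Qed.

Lemma dy_ge0 (K : realType) m k : 0 <= @dy K m k.
Proof. by rewrite /dy divr_ge0. Qed.

Lemma dy_lt (K : realType) m k m' k' : @dy K m k < @dy K m' k' ->
  (k * 2 ^ m' < k' * 2 ^ m)%N.
Proof.
rewrite /dy ltr_pdivrMr ?pow_gt0 // mulrAC ltr_pdivlMr ?pow_gt0 //.
by rewrite -!natrM ltr_nat.
Qed.

Lemma dy_le1 (K : realType) m k : @dy K m k <= 1 -> (k <= 2 ^ m)%N.
Proof. by rewrite /dy ler_pdivrMr ?pow_gt0 // mul1r ler_nat. Qed.

Lemma dy_le1' (K : realType) m k : (k <= 2 ^ m)%N -> @dy K m k <= 1.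
Proof. by rewrite /dy ler_pdivrMr ?pow_gt0 // mul1r ler_nat. Qed.

Lemma dense_dy (K : realType) (x y : K) : 0 <= x -> x < y -> y <= 1 ->
  exists m k, (k <= 2 ^ m)%N /\ x < @dy K m k /\ @dy K m k < y.
Proof.
move=> x0 xy y1; have [N hN] := ltr_add_invr xy.
set P : K := (2 ^ N)%:R.
have P0 : 0 < P by exact: pow_gt0.
have x0' : 0 <= x * P by rewrite mulr_ge0 // ltW.
have /andP[t1 t2] := truncn_itv x0'.
set t := Num.truncn (x * P) in t1 t2.
have xk : x < @dy K N t.+1 by rewrite /dy ltr_pdivlMr.
have ky : @dy K N t.+1 < y.
  apply: le_lt_trans hN.
  have -> : @dy K N t.+1 = t%:R / P + P^-1 by rewrite /dy -natr1 mulrDl mul1r.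
  apply: lerD; first by rewrite ler_pdivrMr.
  have hh : (N.+1)%:R <= P :> K by rewrite /P ler_nat; exact: ltn_expl.
  by rewrite lef_pV2 ?posrE ?ltr0n ?expn_gt0.
exists N, t.+1; split => //; apply: dy_le1; apply/ltW; exact: lt_le_trans ky y1.
Qed.

Theorem mainTheorem3 (K : realType) (n : nat) (R : set K) :
  (2 <= n)%N ->
  R `<=` @unit_interval K ->
  R !=set0 ->
  perfect_set R ->
  embeds_into (split_carrier (@unit_interval K) n) (split_open (@unit_interval K) n)
              (split_carrier R n) (split_open R n).
Proof.
move=> n2 RI [t0 Rt0] pR.
have [clR _] := pR.
have midE r s : exists m, good R r s -> R m /\ good R r m /\ good R m s.
  case: (pselect (good R r s)) => [[t [Rt [rt ts]]]|ng]; last by exists r.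
  have [x [y [z [[Rx /andP[rx _]] [[Ry _] [[Rz /andP[_ zs]] [xy yz]]]]]]] :=
    three_in _ _ _ _ _ pR Rt rt ts.
  exists y => _; split => //; split; first by exists x.
  by exists z.
have h1 : forall r, exists g : K -> K,
    forall s, good R r s -> R (g s) /\ good R r (g s) /\ good R (g s) s.
  by move=> r; have [g hg] := choice (midE r); exists g.
have [mid midP] := choice h1.
have ht1 : t0 - 1 < t0 by lra.
have ht2 : t0 < t0 + 1 by lra.
have [u [v [w [[Ru _] [[Rv _] [[Rw _] [uv vw]]]]]]] := three_in _ _ _ _ _ pR Rt0 ht1 ht2.
have guw : good R u w by exists v.
set V := dyV mid u w.
have Hinv := dyV_inv _ _ _ _ _ midP Ru Rw guw.
have Hup : forall m j k, V (m + j)%N (k * 2 ^ j)%N = V m k.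
  by move=> m j k; exact: dyV_upj.
have Vu m : V m 0%N = u by have := Hup 0%N m 0%N; rewrite add0n mul0n => ->.
have Vw m : V m (2 ^ m)%N = w by have := Hup 0%N m 1%N; rewrite add0n mul1n => ->.
have VR m k : (k <= 2 ^ m)%N -> R (V m k) := V_R Hinv m k.
have Vbnd m k : (k <= 2 ^ m)%N -> u <= V m k <= w.
  move=> km; rewrite -(Vu m) -(Vw m); apply/andP; split; exact: (V_le Hinv).
have dyVlt m k m' k' : (k <= 2 ^ m)%N -> (k' <= 2 ^ m')%N ->
    @dy K m k < @dy K m' k' -> V m k < V m' k'.
  by move=> km km' /dy_lt; exact: (V_cmp Hinv Hup).
pose S x := [set y | y = u \/ exists m k, (k <= 2 ^ m)%N /\ @dy K m k < x /\ y = V m k].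
pose T x := [set y | y = w \/ exists m k, (k <= 2 ^ m)%N /\ x < @dy K m k /\ y = V m k].
have SR x : S x `<=` R by move=> y [->|[m [k [km [_ ->]]]]] //; exact: VR.
have TR x : T x `<=` R by move=> y [->|[m [k [km [_ ->]]]]] //; exact: VR.
have uw : u <= w by exact/ltW/(lt_trans uv).
have Sb x y : S x y -> u <= y <= w.
  by move=> [->|[m [k [km [_ ->]]]]]; [rewrite lexx uw|exact: Vbnd].
have Tb x y : T x y -> u <= y <= w.
  by move=> [->|[m [k [km [_ ->]]]]]; [rewrite lexx uw|exact: Vbnd].
have S0 x : S x u by left.
have T0 x : T x w by left.
have neS x : S x !=set0 by exists u.
have neT x : T x !=set0 by exists w.
have hsS x : has_ubound (S x) by exists w => y /Sb/andP[].
have hsT x : has_lbound (T x) by exists u => y /Tb/andP[].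
have eR : R = closure R by apply/closure_id.
apply: (@embed_ab K n R (fun x => sup (S x)) (fun x => inf (T x)) n2).
- move=> x _; rewrite eR; apply: (closureS (SR x)); exact: closure_sup.
- move=> x _; rewrite eR; apply: (closureS (TR x)).
  move=> U /nbhs_ballP [e e0 eU].
  have ie : inf (T x) < inf (T x) + e by rewrite ltrDl.
  have [y Ty ylt] := inf_lt (neT x) ie.
  exists y; split => //; apply: eU; rewrite -ball_normE /=.
  have iy := ge_inf (hsT x) Ty.
  rewrite ltr_norml; apply/andP; split; lra.
- move=> x _; apply: ge_sup => // y Sy; apply: lb_le_inf => // t Tt.
  case: Tt => [->|[m' [k' [km' [dk' ->]]]]]; first by case/andP: (Sb _ _ Sy).
  case: Sy => [->|[m [k [km [dk ->]]]]]; first by case/andP: (Vbnd _ _ km').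
  apply/ltW/dyVlt => //; exact: lt_trans dk'.
- move=> x y /IE/andP[x0 x1] /IE/andP[y0 y1] xy.
  have [m1 [k1 [km1 [xd1 d1y]]]] := dense_dy _ _ _ x0 xy y1.
  have [m2 [k2 [km2 [d1d2 d2y]]]] := dense_dy _ _ _ (dy_ge0 K m1 k1) d1y y1.
  apply: (@le_lt_trans _ _ (V m1 k1)).
    by apply: (ge_inf (hsT x)); right; exists m1, k1.
  apply: (@lt_le_trans _ _ (V m2 k2)); first exact: dyVlt.
  by apply: (ub_le_sup (hsS y)); right; exists m2, k2.
- move=> x w0 /IE/andP[x0 x1] xpos Rw0 w0a.
  have [e Se w0e] := sup_gt (neS x) w0a.
  case: Se => [eu|[m [k [km [dk ek]]]]].
    exists (x / 2); split; first by apply/IE/andP; split; lra.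
    split; first by lra.
    apply: lt_le_trans w0e _; rewrite eu; exact: (ub_le_sup (hsS _)).
  have d0 := dy_ge0 K m k.
  exists ((@dy K m k + x) / 2); split; first by apply/IE/andP; split; lra.
  split; first by lra.
  apply: lt_le_trans w0e _; apply: (ub_le_sup (hsS _)); right; exists m, k.
  by split => //; split => //; lra.
- move=> x w1 /IE/andP[x0 x1] xlt Rw1 bw1.
  have [e Te ew1] := inf_lt (neT x) bw1.
  case: Te => [ew|[m [k [km [dk ek]]]]].
    exists ((x + 1) / 2); split; first by apply/IE/andP; split; lra.
    split; first by lra.
    apply: le_lt_trans _ ew1; rewrite ew; exact: (ge_inf (hsT _)).
  have d1 := dy_le1' K m k km.
  exists ((x + @dy K m k) / 2); split; first by apply/IE/andP; split; lra.
  split; first by lra.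
  apply: le_lt_trans _ ew1; apply: (ge_inf (hsT _)); right; exists m, k.
  by split => //; split => //; lra.
Qed.
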